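(* Let $x\ne y$ be points of $\partial\mathbb{H}^2$ and let $r,s$ be two distinct vertices of the ladder $\mathcal{L}(x,y)$. Then $\mathcal{L}(r,s)\subseteq\mathcal{L}(x,y)$.
   Context: The Farey graph $\mathcal{F}$ has vertex set $\mathbb{Q}\cup\{\infty\}$ (vertices $p/q$ in lowest terms, $\infty=1/0$), with $p/q$ and $r/s$ adjacent iff $|ps-qr|=1$. It is embedded in $\overline{\mathbb{H}}=\mathbb{H}^2\cup\partial\mathbb{H}^2$ (upper half-plane model, $\partial\mathbb{H}^2=\mathbb{R}\cup\{\infty\}$) with edges realized as hyperbolic geodesics; the closures of the complementary regions are ideal triangles called Farey triangles. For distinct $x,y\in\partial\mathbb{H}^2$, the ladder $\mathcal{L}(x,y)$ is the union of all Farey triangles whose interior meets the hyperbolic geodesic from $x$ to $y$ (if $x,y$ are adjacent vertices this is empty). *)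

(* Defs.v *)
From Stdlib Require Import Reals ZArith.
Open Scope R_scope.

(* Points of the boundary of H^2 (upper half-plane model): R ∪ {∞}. *)
Inductive bpt : Type := Fin (a : R) | Inf.

(* Points of closed H^2 = H^2 ∪ ∂H^2.  [HIn u v] stands for u + i v
   (it is a point of H^2 only when v > 0; all predicates below require it). *)
Inductive hpt : Type := HIn (u v : R) | HBd (p : bpt).

(* For distinct boundary points a, b, [sidefun a b u v] is a real function on
   H^2 whose zero set is the hyperbolic geodesic with endpoints a, b and whose
   sign distinguishes the two sides of it:
     a, b finite : |z|^2 - (a+b) Re z + a b   (zero on the semicircle on [a,b])
     one of them ∞, the other c finite : Re z - c (zero on the vertical line). *)
Definition sidefun (a b : bpt) (u v : R) : R :=
  match a, b with
  | Fin a, Fin b => u * u + v * v - (a + b) * u + a * b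
  | Fin a, Inf => u - a
  | Inf, Fin b => u - b
  | Inf, Inf => 0
  end.

(* Sign of (the continuous extension of) [sidefun a b] at a boundary point c
   not equal to a, b: a positive multiple of the limiting value. *)
Definition sideval (a b c : bpt) : R :=
  match a, b, c with
  | Fin a, Fin b, Fin c => (c - a) * (c - b)
  | Fin a, Fin b, Inf => 1
  | Fin a, Inf, Fin c => c - a
  | Inf, Fin b, Fin c => c - b
  | _, _, _ => 0
  end.

Definition on_geodesic (x y : bpt) (u v : R) : Prop :=
  0 < v /\ sidefun x y u v = 0.

Definition in_tri_interior (a b c : bpt) (u v : R) : Prop :=
  0 < v /\
  sidefun a b u v * sideval a b c > 0 /\
  sidefun b c u v * sideval b c a > 0 /\
  sidefun c a u v * sideval c a b > 0.

Definition in_closed_tri (a b c : bpt) (P : hpt) : Prop :=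
  match P with
  | HIn u v =>
      0 < v /\
      sidefun a b u v * sideval a b c >= 0 /\
      sidefun b c u v * sideval b c a >= 0 /\
      sidefun c a u v * sideval c a b >= 0
  | HBd p => p = a \/ p = b \/ p = c
  end.

Definition farey_pair (pq : Z * Z) : Prop :=
  let (p, q) := pq in
  ((0 < q)%Z /\ Z.gcd p q = 1%Z) \/ (p = 1%Z /\ q = 0%Z).

Definition vtx (pq : Z * Z) : bpt :=
  let (p, q) := pq in
  if Z.eqb q 0 then Inf else Fin (IZR p / IZR q).

Definition farey_adj (pq rs : Z * Z) : Prop :=
  let (p, q) := pq in let (r, s) := rs in Z.abs (p * s - q * r) = 1%Z.

Definition is_farey_vertex (r : bpt) : Prop :=
  exists pq, farey_pair pq /\ r = vtx pq.

Definition is_farey_triangle (a b c : Z * Z) : Prop :=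
  farey_pair a /\ farey_pair b /\ farey_pair c /\
  farey_adj a b /\ farey_adj b c /\ farey_adj c a.

Definition ladder (x y : bpt) (P : hpt) : Prop :=
  exists a b c : Z * Z,
    is_farey_triangle a b c /\
    (exists u v, on_geodesic x y u v /\ in_tri_interior (vtx a) (vtx b) (vtx c) u v) /\
    in_closed_tri (vtx a) (vtx b) (vtx c) P.

(* Main.v *)
Require Import Defs.
From Stdlib Require Import Reals ZArith Lra Lia Psatz Classical.
Open Scope R_scope.

Record v3 := mk { vt : R; vu : R; vw : R }.
Definition det3 (A B C : v3) : R :=
  vt A * (vu B * vw C - vw B * vu C) - vu A * (vt B * vw C - vw B * vt C)
  + vw A * (vt B * vu C - vu B * vt C).
Definition Qf (A B : v3) : R := vu A * vu B - (vt A * vw B + vw A * vt B) / 2.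
Definition Vb (c : bpt) : v3 := match c with Fin a => mk 1 a (a*a) | Inf => mk 0 0 1 end.
Definition Zv (u v : R) : v3 := mk 1 u (u*u+v*v).
Definition lin (a b : bpt) (W : v3) : R :=
  match a, b with
  | Fin a, Fin b => vw W - (a+b) * vu W + a*b*vt W
  | Fin a, Inf => vu W - a * vt W
  | Inf, Fin b => vu W - b * vt W
  | Inf, Inf => 0 end.

Lemma sidefun_lin a b u v : sidefun a b u v = lin a b (Zv u v).
Proof. destruct a, b; simpl; ring. Qed.
Lemma sideval_lin a b c : sideval a b c = lin a b (Vb c).
Proof. destruct a, b, c; simpl; ring. Qed.

Lemma lin_det a b : a <> b -> exists k, k <> 0 /\ forall W, lin a b W = k * det3 (Vb a) (Vb b) W.
Proof.
  intro H; destruct a as [a|], b as [b|]; simpl.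
  - assert (b - a <> 0) by (intro; apply H; f_equal; lra).
    exists (/(b-a)); split; [apply Rinv_neq_0_compat; auto|].
    intro W; unfold det3; simpl; field; auto.
  - exists (-1); split; [lra|]; intro W; unfold det3; simpl; ring.
  - exists 1; split; [lra|]; intro W; unfold det3; simpl; ring.
  - congruence.
Qed.

Lemma prod_pos a b W1 W2 : a <> b ->
  (lin a b W1 * lin a b W2 > 0 <-> det3 (Vb a) (Vb b) W1 * det3 (Vb a) (Vb b) W2 > 0).
Proof.
  intro H; destruct (lin_det a b H) as [k [Hk E]]; rewrite !E.
  assert (0 < k*k) by nra.
  replace (k * det3 (Vb a) (Vb b) W1 * (k * det3 (Vb a) (Vb b) W2)) with
   ((k*k) * (det3 (Vb a) (Vb b) W1 * det3 (Vb a) (Vb b) W2)) by ring.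
  split; intro; nra.
Qed.

Lemma zero_iff a b W : a <> b -> (lin a b W = 0 <-> det3 (Vb a) (Vb b) W = 0).
Proof.
  intro H; destruct (lin_det a b H) as [k [Hk E]]; rewrite !E.
  split; intro. apply Rmult_integral in H0; tauto. rewrite H0; ring.
Qed.

Lemma det_cyc A B C : det3 A B C = det3 B C A.
Proof. unfold det3; ring. Qed.
Lemma det_rep A B : det3 A B A = 0.
Proof. unfold det3; ring. Qed.
Lemma det_rep2 A B : det3 A B B = 0.
Proof. unfold det3; ring. Qed.

Lemma interior_det a b c u v : a <> b -> b <> c -> c <> a ->
  in_tri_interior a b c u v ->
  0 < v /\ det3 (Vb a) (Vb b) (Zv u v) * det3 (Vb a) (Vb b) (Vb c) > 0 /\
  det3 (Vb b) (Vb c) (Zv u v) * det3 (Vb b) (Vb c) (Vb a) > 0 /\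
  det3 (Vb c) (Vb a) (Zv u v) * det3 (Vb c) (Vb a) (Vb b) > 0.
Proof.
  intros Hab Hbc Hca [Hv [H1 [H2 H3]]].
  rewrite !sidefun_lin, !sideval_lin in *.
  split; auto. split; [apply prod_pos; auto|]. split; apply prod_pos; auto.
Qed.

Lemma det_interior a b c u v : a <> b -> b <> c -> c <> a ->
  0 < v -> det3 (Vb a) (Vb b) (Zv u v) * det3 (Vb a) (Vb b) (Vb c) > 0 ->
  det3 (Vb b) (Vb c) (Zv u v) * det3 (Vb b) (Vb c) (Vb a) > 0 ->
  det3 (Vb c) (Vb a) (Zv u v) * det3 (Vb c) (Vb a) (Vb b) > 0 ->
  in_tri_interior a b c u v.
Proof.
  intros Hab Hbc Hca Hv H1 H2 H3.
  unfold in_tri_interior; rewrite !sidefun_lin, !sideval_lin.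
  split; auto. split; [apply prod_pos; auto|]. split; apply prod_pos; auto.
Qed.

Lemma geo_det x y u v : x <> y -> on_geodesic x y u v <-> 0 < v /\ det3 (Vb x) (Vb y) (Zv u v) = 0.
Proof.
  intro H; unfold on_geodesic; rewrite sidefun_lin, zero_iff by auto; tauto.
Qed.

Lemma det_lin A B Z X Y l m :
  vt Z = l * vt X + m * vt Y -> vu Z = l * vu X + m * vu Y -> vw Z = l * vw X + m * vw Y ->
  det3 A B Z = l * det3 A B X + m * det3 A B Y.
Proof. intros H1 H2 H3; unfold det3; rewrite H1, H2, H3; ring. Qed.

Lemma chord x y u v : x <> y -> 0 < v -> det3 (Vb x) (Vb y) (Zv u v) = 0 ->
  exists l m, 0 < l /\ 0 < m /\ forall A B,
    det3 A B (Zv u v) = l * det3 A B (Vb x) + m * det3 A B (Vb y).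
Proof.
  intros Hxy Hv Hd; destruct x as [x|], y as [y|]; unfold det3 in Hd; simpl in Hd.
  - assert (Hne : y - x <> 0) by (intro; apply Hxy; f_equal; lra).
    assert (Hw : u*u+v*v = (x+y)*u - x*y).
    { assert ((y - x) * (u*u+v*v - ((x+y)*u - x*y)) = 0) by (rewrite <- Hd; ring).
      apply Rmult_integral in H; destruct H; [contradiction|lra]. }
    assert (Hb : (u - x) * (u - y) < 0) by nra.
    exists ((y-u)/(y-x)), ((u-x)/(y-x)).
    assert (0 < (y-u)/(y-x) /\ 0 < (u-x)/(y-x)) as [P1 P2].
    { destruct (Rlt_or_le x y).
      - split; apply Rdiv_lt_0_compat; nra.
      - assert (y < x) by (destruct H; auto; subst; lra).
        replace ((y-u)/(y-x)) with ((u-y)/(x-y)) by (field; lra).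
        replace ((u-x)/(y-x)) with ((x-u)/(x-y)) by (field; lra).
        split; apply Rdiv_lt_0_compat; nra. }
    split; auto; split; auto; intros A B; apply det_lin; simpl.
    + field; auto.
    + field; auto.
    + rewrite Hw; field; auto.
  - exists 1, (v*v); split; [lra|split; [nra|]].
    assert (u = x) by lra; subst.
    intros A B; apply det_lin; simpl; ring.
  - exists (v*v), 1; split; [nra|split; [lra|]].
    assert (u = y) by lra; subst.
    intros A B; apply det_lin; simpl; ring.
  - congruence.
Qed.

Lemma chord_conv x y l m : x <> y -> 0 < l -> 0 < m ->
  exists u v k, 0 < v /\ 0 < k /\ forall A B,
    det3 A B (Zv u v) = k * (l * det3 A B (Vb x) + m * det3 A B (Vb y)).
Proof.
  intros Hxy Hl Hm; destruct x as [x|], y as [y|].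
  - assert (Hne : y - x <> 0) by (intro; apply Hxy; f_equal; lra).
    assert (Hp : 0 < l*m*((x-y)*(x-y))).
    { apply Rmult_lt_0_compat; [nra|]. assert (x - y <> 0) by lra. nra. }
    set (s := sqrt (l*m*((x-y)*(x-y)))).
    assert (Hs : s * s = l*m*((x-y)*(x-y))) by (apply sqrt_sqrt; lra).
    assert (Hs0 : 0 < s) by (apply sqrt_lt_R0; lra).
    exists ((l*x+m*y)/(l+m)), (s/(l+m)), (/(l+m)).
    split; [apply Rdiv_lt_0_compat; lra|]. split; [apply Rinv_0_lt_compat; lra|].
    intros A B.
    assert (E : (/(l+m)) * (l * det3 A B (Vb (Fin x)) + m * det3 A B (Vb (Fin y)))
       = (l/(l+m)) * det3 A B (Vb (Fin x)) + (m/(l+m)) * det3 A B (Vb (Fin y))).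
    { field; lra. }
    rewrite E. apply det_lin; simpl.
    + field; lra.
    + field; lra.
    + replace (s/(l+m) * (s/(l+m))) with (s*s/((l+m)*(l+m))) by (field; lra).
      rewrite Hs. field; lra.
  - set (s := sqrt (m/l)).
    assert (Hs : s * s = m/l) by (apply sqrt_sqrt; apply Rlt_le, Rdiv_lt_0_compat; lra).
    assert (Hs0 : 0 < s) by (apply sqrt_lt_R0, Rdiv_lt_0_compat; lra).
    exists x, s, (/l). split; auto. split; [apply Rinv_0_lt_compat; lra|].
    intros A B.
    replace (/l * (l * det3 A B (Vb (Fin x)) + m * det3 A B (Vb Inf))) with
      (1 * det3 A B (Vb (Fin x)) + (m/l) * det3 A B (Vb Inf)) by (field; lra).
    apply det_lin; simpl; try ring. rewrite Hs; ring.
  - set (s := sqrt (l/m)).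
    assert (Hs : s * s = l/m) by (apply sqrt_sqrt; apply Rlt_le, Rdiv_lt_0_compat; lra).
    assert (Hs0 : 0 < s) by (apply sqrt_lt_R0, Rdiv_lt_0_compat; lra).
    exists y, s, (/m). split; auto. split; [apply Rinv_0_lt_compat; lra|].
    intros A B.
    replace (/m * (l * det3 A B (Vb Inf) + m * det3 A B (Vb (Fin y)))) with
      ((l/m) * det3 A B (Vb Inf) + 1 * det3 A B (Vb (Fin y))) by (field; lra).
    apply det_lin; simpl; try ring. rewrite Hs; ring.
  - congruence.
Qed.

Lemma Q_self a : Qf (Vb a) (Vb a) = 0.
Proof. destruct a; unfold Qf; simpl; field. Qed.
Lemma Q_neg a b : a <> b -> Qf (Vb a) (Vb b) < 0.
Proof.
  intro H; destruct a as [a|], b as [b|]; unfold Qf; simpl.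
  - assert (a - b <> 0) by (intro; apply H; f_equal; lra).
    replace (a * b - (1 * (b * b) + a * a * 1) / 2) with (-((a-b)*(a-b))/2) by field. nra.
  - lra.
  - lra.
  - congruence.
Qed.
Lemma Q_le a b : Qf (Vb a) (Vb b) <= 0.
Proof.
  destruct a as [a|], b as [b|]; unfold Qf; simpl; [|nra|nra|nra].
  replace (a * b - (1 * (b * b) + a * a * 1) / 2) with (-((a-b)*(a-b))/2) by field. pose proof (Rle_0_sqr (a-b)); unfold Rsqr in *; lra.
Qed.

Section Bary.
Variables A B C X : v3.
Let D := det3 A B C.
Let ba := det3 B C X.
Let bb := det3 C A X.
Let bc := det3 A B X.

Lemma cram1 : D * vt X = ba * vt A + bb * vt B + bc * vt C.
Proof. unfold D, ba, bb, bc, det3; ring. Qed.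
Lemma cram2 : D * vu X = ba * vu A + bb * vu B + bc * vu C.
Proof. unfold D, ba, bb, bc, det3; ring. Qed.
Lemma cram3 : D * vw X = ba * vw A + bb * vw B + bc * vw C.
Proof. unfold D, ba, bb, bc, det3; ring. Qed.

Lemma Qexp (P : v3) al be ga :
  Qf P (mk (al * vt A + be * vt B + ga * vt C) (al * vu A + be * vu B + ga * vu C)
        (al * vw A + be * vw B + ga * vw C)) = al * Qf P A + be * Qf P B + ga * Qf P C.
Proof. unfold Qf; simpl; field. Qed.

Lemma Qexp2 al be ga :
  let W := mk (al * vt A + be * vt B + ga * vt C) (al * vu A + be * vu B + ga * vu C)
        (al * vw A + be * vw B + ga * vw C) in
  Qf W W = al*al*Qf A A + be*be*Qf B B + ga*ga*Qf C C
    + 2*(al*be*Qf A B + be*ga*Qf B C + ga*al*Qf C A).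
Proof. unfold Qf; simpl; field. Qed.

Lemma scaleX : mk (D * vt X) (D * vu X) (D * vw X) =
  mk (ba * vt A + bb * vt B + bc * vt C) (ba * vu A + bb * vu B + bc * vu C)
        (ba * vw A + bb * vw B + bc * vw C).
Proof. rewrite cram1, cram2, cram3; reflexivity. Qed.

Lemma bary_lin (P : v3) : D * Qf P X = ba * Qf P A + bb * Qf P B + bc * Qf P C.
Proof.
  rewrite <- Qexp, <- scaleX. unfold Qf; simpl; field.
Qed.

Lemma bary_quad : D * D * Qf X X = ba*ba*Qf A A + bb*bb*Qf B B + bc*bc*Qf C C
    + 2*(ba*bb*Qf A B + bb*bc*Qf B C + bc*ba*Qf C A).
Proof.
  rewrite <- Qexp2, <- scaleX. unfold Qf; simpl; field.
Qed.
End Bary.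

Lemma core xi xj xk yi yj yk wij wjk wik :
  0 < wij -> 0 < wjk -> 0 < wik ->
  xi*xj*wij + xj*xk*wjk + xk*xi*wik = 0 ->
  yi*yj*wij + yj*yk*wjk + yk*yi*wik = 0 ->
  xk*wjk + xi*wij >= 0 -> yj*wij + yk*wik >= 0 ->
  xi <= 0 -> yj <= 0 -> xj > 0 -> yi > 0 -> (xk > 0 \/ yk > 0) ->
  exists l m, 0 < l /\ 0 < m /\ l*xi+m*yi > 0 /\ l*xj+m*yj > 0 /\ l*xk+m*yk > 0.
Proof.
  intros w1 w2 w3 bx byy hx hy xi0 yj0 xj0 yi0 hk.
  assert (xk0 : xk >= 0).
  { assert (xk*wjk >= 0) by nra. nra. }
  assert (yk0 : yk >= 0).
  { assert (yk*wik >= 0) by nra. nra. }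
  assert (K1 : xj*wjk + xi*wik > 0).
  { destruct (Rle_lt_or_eq_dec xi 0 xi0) as [Hlt|Heq].
    - assert (xk*wjk > 0) by nra. assert (xk > 0) by nra.
      assert (xk * (xj*wjk + xi*wik) = - (xi*xj*wij)) by lra.
      assert (- (xi*xj*wij) > 0).
      { assert (xi*xj < 0) by nra. nra. }
      nra.
    - subst; nra. }
  assert (K2 : yi*wik + yj*wjk > 0).
  { destruct (Rle_lt_or_eq_dec yj 0 yj0) as [Hlt|Heq].
    - assert (yk*wik > 0) by nra. assert (yk > 0) by nra.
      assert (yk * (yi*wik + yj*wjk) = - (yi*yj*wij)) by lra.
      assert (- (yi*yj*wij) > 0).
      { assert (yi*yj < 0) by nra. nra. }
      nra.
    - subst; nra. }
  assert (M : xj*yi - xi*yj > 0).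
  { assert (P1 : (xj*wjk) * (yi*wik) > (-(xi*wik)) * (-(yj*wjk))).
    { assert (-(xi*wik) >= 0) by nra. assert (-(yj*wjk) >= 0) by nra.
      assert (xj*wjk > -(xi*wik)) by lra. assert (yi*wik > -(yj*wjk)) by lra. nra. }
    assert (wjk*wik*(xj*yi - xi*yj) > 0) by nra.
    assert (0 < wjk*wik) by nra. nra. }
  exists (yi - yj), (xj - xi). split; [lra|]. split; [lra|].
  split; [nra|]. split; [nra|].
  destruct hk; nra.
Qed.

Lemma lemA x1 x2 x3 y1 y2 y3 w12 w23 w13 :
  0 < w12 -> 0 < w23 -> 0 < w13 ->
  x1*x2*w12 + x2*x3*w23 + x3*x1*w13 = 0 ->
  y1*y2*w12 + y2*y3*w23 + y3*y1*w13 = 0 ->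
  x2*w12 + x3*w13 >= 0 -> x1*w12 + x3*w23 >= 0 -> x1*w13 + x2*w23 >= 0 ->
  y2*w12 + y3*w13 >= 0 -> y1*w12 + y3*w23 >= 0 -> y1*w13 + y2*w23 >= 0 ->
  (x1 > 0 \/ y1 > 0) -> (x2 > 0 \/ y2 > 0) -> (x3 > 0 \/ y3 > 0) ->
  exists l m, 0 < l /\ 0 < m /\ l*x1+m*y1 > 0 /\ l*x2+m*y2 > 0 /\ l*x3+m*y3 > 0.
Proof.
  intros w1 w2 w3 bx byy a1 a2 a3 b1 b2 b3 h1 h2 h3.
  assert (EX : x1 <= 0 \/ x2 <= 0 \/ x3 <= 0).
  { destruct (Rle_or_lt x1 0); auto. destruct (Rle_or_lt x2 0); auto.
    destruct (Rle_or_lt x3 0); auto. exfalso.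
    assert (0 < x1*x2*w12) by (apply Rmult_lt_0_compat; nra).
    assert (0 < x2*x3*w23) by (apply Rmult_lt_0_compat; nra).
    assert (0 < x3*x1*w13) by (apply Rmult_lt_0_compat; nra). lra. }
  assert (EY : y1 <= 0 \/ y2 <= 0 \/ y3 <= 0).
  { destruct (Rle_or_lt y1 0); auto. destruct (Rle_or_lt y2 0); auto.
    destruct (Rle_or_lt y3 0); auto. exfalso.
    assert (0 < y1*y2*w12) by (apply Rmult_lt_0_compat; nra).
    assert (0 < y2*y3*w23) by (apply Rmult_lt_0_compat; nra).
    assert (0 < y3*y1*w13) by (apply Rmult_lt_0_compat; nra). lra. }
  destruct EX as [X1|[X2|X3]]; destruct EY as [Y1|[Y2|Y3]];
    try (exfalso; lra).
  -
    destruct (core x1 x2 x3 y1 y2 y3 w12 w23 w13) as [l [m H]]; try lra; try tauto.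
    exists l, m; tauto.
  - destruct (core x1 x3 x2 y1 y3 y2 w13 w23 w12) as [l [m H]]; try lra; try tauto.
    exists l, m; tauto.
  - destruct (core x2 x1 x3 y2 y1 y3 w12 w13 w23) as [l [m H]]; try lra; try tauto.
    exists l, m; tauto.
  - destruct (core x2 x3 x1 y2 y3 y1 w23 w13 w12) as [l [m H]]; try lra; try tauto.
    exists l, m; tauto.
  - destruct (core x3 x1 x2 y3 y1 y2 w13 w12 w23) as [l [m H]]; try lra; try tauto.
    exists l, m; tauto.
  - destruct (core x3 x2 x1 y3 y2 y1 w23 w12 w13) as [l [m H]]; try lra; try tauto.
    exists l, m; tauto.
Qed.

Lemma Qsym P1 P2 : Qf P1 P2 = Qf P2 P1.
Proof. unfold Qf; field. Qed.

Definition g1 A B C W := det3 B C W * det3 B C A.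
Definition g2 A B C W := det3 C A W * det3 C A B.
Definition g3 A B C W := det3 A B W * det3 A B C.

Lemma bary_facts A B C X :
  Qf A A = 0 -> Qf B B = 0 -> Qf C C = 0 -> Qf X X = 0 ->
  Qf A X <= 0 -> Qf B X <= 0 -> Qf C X <= 0 ->
  let x1 := g1 A B C X in let x2 := g2 A B C X in let x3 := g3 A B C X in
  x1*x2*(-Qf A B) + x2*x3*(-Qf B C) + x3*x1*(-Qf C A) = 0 /\
  x2*(-Qf A B) + x3*(-Qf C A) >= 0 /\
  x1*(-Qf A B) + x3*(-Qf B C) >= 0 /\
  x1*(-Qf C A) + x2*(-Qf B C) >= 0.
Proof.
  intros HA HB HC HX HAX HBX HCX x1 x2 x3.
  pose proof (bary_quad A B C X) as Hq.
  pose proof (bary_lin A B C X A) as HlA.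
  pose proof (bary_lin A B C X B) as HlB.
  pose proof (bary_lin A B C X C) as HlC.
  assert (E1 : det3 B C A = det3 A B C) by (unfold det3; ring).
  assert (E2 : det3 C A B = det3 A B C) by (unfold det3; ring).
  unfold x1, x2, x3, g1, g2, g3; rewrite E1, E2.
  rewrite (Qsym B A), (Qsym C B), (Qsym A C) in *.
  set (D := det3 A B C) in *. set (ba := det3 B C X) in *.
  set (bb := det3 C A X) in *. set (bc := det3 A B X) in *.
  rewrite HA, HB, HC, HX in *.
  assert (DD : 0 <= D*D) by nra.
  split; [|split; [|split]].
  - replace (ba * D * (bb * D) * - Qf A B + bb * D * (bc * D) * - Qf B C + bc * D * (ba * D) * - Qf C A)
      with (- (D*D) * (ba * bb * Qf A B + bb * bc * Qf B C + bc * ba * Qf C A)) by ring.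
    assert (ba * bb * Qf A B + bb * bc * Qf B C + bc * ba * Qf C A = 0) by lra.
    rewrite H; ring.
  - replace (bb * D * - Qf A B + bc * D * - Qf C A) with (- (D * (D * Qf A X))) by (rewrite HlA; ring).
    nra.
  - replace (ba * D * - Qf A B + bc * D * - Qf B C) with (- (D * (D * Qf B X))) by (rewrite HlB; ring).
    nra.
  - replace (ba * D * - Qf C A + bb * D * - Qf B C) with (- (D * (D * Qf C X))) by (rewrite HlC; ring).
    nra.
Qed.

Definition Er (pq rs : Z * Z) : R :=
  let (p, q) := pq in let (r, s) := rs in IZR q * IZR r - IZR p * IZR s.
Definition Ez (pq rs : Z * Z) : Z :=
  let (p, q) := pq in let (r, s) := rs in (q * r - p * s)%Z.
Lemma Er_Ez a b : Er a b = IZR (Ez a b).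
Proof. destruct a, b; unfold Er, Ez; rewrite minus_IZR, !mult_IZR; ring. Qed.

Lemma F1 pq : farey_pair pq -> exists rho, 0 < rho /\ Vb (vtx pq) =
  mk (IZR (snd pq) * IZR (snd pq) / rho) (IZR (fst pq) * IZR (snd pq) / rho)
     (IZR (fst pq) * IZR (fst pq) / rho).
Proof.
  destruct pq as [p q]; simpl; intros [[Hq Hg]|[Hp Hq]].
  - assert (Z.eqb q 0 = false) by (apply Z.eqb_neq; lia).
    rewrite H. assert (0 < IZR q) by (apply IZR_lt; lia).
    exists (IZR q * IZR q); split; [nra|]. simpl. f_equal; field; lra.
  - subst; simpl. exists 1; split; [lra|]. f_equal; field.
Qed.

Lemma det_H a b c : farey_pair a -> farey_pair b -> farey_pair c ->
  exists K, 0 < K /\ det3 (Vb (vtx a)) (Vb (vtx b)) (Vb (vtx c)) = K * (Er a b * Er a c * Er b c).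
Proof.
  intros Ha Hb Hc.
  destruct (F1 a Ha) as [ra [Pa Ea]], (F1 b Hb) as [rb [Pb Eb]], (F1 c Hc) as [rc [Pc Ec]].
  rewrite Ea, Eb, Ec. exists (/ (ra * rb * rc)). split.
  { apply Rinv_0_lt_compat; repeat apply Rmult_lt_0_compat; auto. }
  destruct a as [p q], b as [r s], c as [m n]; unfold det3, Er; simpl.
  field; repeat split; lra.
Qed.

Lemma int_lem P Q : Z.abs (P - Q) = 1%Z -> (0 <= P * Q)%Z.
Proof. intros. nia. Qed.

Lemma plucker a b a1 b1 :
  (Ez a a1 * Ez b b1 - Ez a b1 * Ez b a1 = Ez a b * Ez a1 b1)%Z.
Proof. destruct a, b, a1, b1; unfold Ez; ring. Qed.

Lemma adj_Ez a b : farey_adj a b -> Z.abs (Ez a b) = 1%Z.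
Proof. destruct a, b; unfold farey_adj, Ez; intros; lia. Qed.

Lemma noncross a b a1 b1 : farey_pair a -> farey_pair b -> farey_pair a1 -> farey_pair b1 ->
  farey_adj a b -> farey_adj a1 b1 ->
  0 <= det3 (Vb (vtx a)) (Vb (vtx b)) (Vb (vtx a1)) * det3 (Vb (vtx a)) (Vb (vtx b)) (Vb (vtx b1)).
Proof.
  intros Ha Hb Ha1 Hb1 Hab H1.
  destruct (det_H a b a1 Ha Hb Ha1) as [K1 [P1 E1]].
  destruct (det_H a b b1 Ha Hb Hb1) as [K2 [P2 E2]].
  rewrite E1, E2, !Er_Ez.
  assert (Z.abs (Ez a a1 * Ez b b1 - Ez a b1 * Ez b a1) = 1%Z).
  { rewrite plucker, Z.abs_mul, (adj_Ez _ _ Hab), (adj_Ez _ _ H1); reflexivity. }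
  apply int_lem in H. apply IZR_le in H. rewrite !mult_IZR in H.
  assert (0 <= IZR (Ez a b) * IZR (Ez a b)) by nra.
  replace (K1 * (IZR (Ez a b) * IZR (Ez a a1) * IZR (Ez b a1)) *
    (K2 * (IZR (Ez a b) * IZR (Ez a b1) * IZR (Ez b b1)))) with
    ((K1 * K2) * (IZR (Ez a b) * IZR (Ez a b)) * (IZR (Ez a a1) * IZR (Ez b b1) * (IZR (Ez a b1) * IZR (Ez b a1)))) by ring.
  apply Rmult_le_pos; [apply Rmult_le_pos|]; nra.
Qed.

Lemma tri_det a b c : is_farey_triangle a b c ->
  det3 (Vb (vtx a)) (Vb (vtx b)) (Vb (vtx c)) <> 0.
Proof.
  intros [Ha [Hb [Hc [Hab [Hbc Hca]]]]].
  destruct (det_H a b c Ha Hb Hc) as [K [P E]]. rewrite E, !Er_Ez.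
  apply adj_Ez in Hab. apply adj_Ez in Hbc. apply adj_Ez in Hca.
  assert (Ez a c = - Ez c a)%Z by (destruct a, c; unfold Ez; ring).
  rewrite <- !mult_IZR.
  intro HH. apply Rmult_integral in HH. destruct HH as [|HH]; [lra|].
  apply eq_IZR in HH. lia.
Qed.

Lemma tri_distinct a b c : is_farey_triangle a b c ->
  vtx a <> vtx b /\ vtx b <> vtx c /\ vtx c <> vtx a.
Proof.
  intro H; pose proof (tri_det a b c H) as D.
  split; [|split]; intro E; apply D; rewrite E; unfold det3; ring.
Qed.

Lemma tri_rot a b c : is_farey_triangle a b c -> is_farey_triangle b c a.
Proof. unfold is_farey_triangle; tauto. Qed.

Lemma three_signs g1 g2 g3 h1 h2 h3 :
  0 < h1 -> 0 < h2 -> 0 < h3 -> h1*g1 + h2*g2 + h3*g3 <= 0 ->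
  0 <= g1*g2 -> 0 <= g2*g3 -> 0 <= g3*g1 -> g1 <= 0 /\ g2 <= 0 /\ g3 <= 0.
Proof.
  intros P1 P2 P3 S Q12 Q23 Q31.
  assert (K : forall u v, 0 < u -> 0 <= u * v -> 0 <= v).
  { intros u v Hu Huv. destruct (Rle_or_lt 0 v); auto. assert (u * v < 0) by nra. lra. }
  destruct (Rle_or_lt g1 0); destruct (Rle_or_lt g2 0); destruct (Rle_or_lt g3 0);
    try (split; [|split]; auto; fail); exfalso.
  all: repeat match goal with
    | H : 0 < ?g |- _ => lazymatch goal with
        | H' : 0 <= g * ?v |- _ => let HH := fresh in assert (HH : 0 <= v) by (apply (K g v); auto); clear H'
        | H' : 0 <= ?v * g |- _ => let HH := fresh in assert (HH : 0 <= v) by (apply (K g v); [auto| rewrite Rmult_comm; auto]); clear H'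
        end
    end.
  all: assert (0 <= h1 * g1 /\ 0 <= h2*g2 /\ 0 <= h3*g3) as [? [? ?]] by (repeat split; apply Rmult_le_pos; lra).
  all: try (assert (0 < h1 * g1) by (apply Rmult_lt_0_compat; lra); lra).
  all: try (assert (0 < h2 * g2) by (apply Rmult_lt_0_compat; lra); lra).
  all: try (assert (0 < h3 * g3) by (apply Rmult_lt_0_compat; lra); lra).
Qed.

Lemma lemN a b c a1 b1 c1 Z :
  is_farey_triangle a b c -> is_farey_triangle a1 b1 c1 ->
  let A := Vb (vtx a) in let B := Vb (vtx b) in let C := Vb (vtx c) in
  let A1 := Vb (vtx a1) in let B1 := Vb (vtx b1) in let C1 := Vb (vtx c1) in
  det3 A1 B1 Z * det3 A1 B1 C1 > 0 ->
  det3 B1 C1 Z * det3 B1 C1 A1 > 0 ->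
  det3 C1 A1 Z * det3 C1 A1 B1 > 0 ->
  det3 A B Z * det3 A B C <= 0 ->
  det3 A B A1 * det3 A B C <= 0 /\ det3 A B B1 * det3 A B C <= 0 /\ det3 A B C1 * det3 A B C <= 0.
Proof.
  intros T T1 A B C A1 B1 C1 h3 h1 h2 HZ.
  destruct T as [Ha [Hb [Hc [Hab _]]]]. destruct T1 as [Ha1 [Hb1 [Hc1 [H12 [H23 H31]]]]].
  pose proof (noncross a b a1 b1 Ha Hb Ha1 Hb1 Hab H12) as N12.
  pose proof (noncross a b b1 c1 Ha Hb Hb1 Hc1 Hab H23) as N23.
  pose proof (noncross a b c1 a1 Ha Hb Hc1 Ha1 Hab H31) as N31.
  fold A B A1 B1 C1 in N12, N23, N31.
  assert (Id : det3 A1 B1 C1 * det3 A B Z = det3 B1 C1 Z * det3 A B A1 + det3 C1 A1 Z * det3 A B B1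
     + det3 A1 B1 Z * det3 A B C1) by (unfold det3; ring).
  assert (E1 : det3 B1 C1 A1 = det3 A1 B1 C1) by (unfold det3; ring).
  assert (E2 : det3 C1 A1 B1 = det3 A1 B1 C1) by (unfold det3; ring).
  rewrite E1 in h1. rewrite E2 in h2.
  set (D1 := det3 A1 B1 C1) in *. set (Dl := det3 A B C) in *.
  set (x := det3 A B A1) in *. set (y := det3 A B B1) in *. set (z := det3 A B C1) in *.
  assert (S : (det3 B1 C1 Z * D1) * (x * Dl) + (det3 C1 A1 Z * D1) * (y * Dl) + (det3 A1 B1 Z * D1) * (z * Dl) <= 0).
  { replace ((det3 B1 C1 Z * D1) * (x * Dl) + (det3 C1 A1 Z * D1) * (y * Dl) + (det3 A1 B1 Z * D1) * (z * Dl))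
      with ((D1 * D1) * (det3 A B Z * Dl)).
    2:{ transitivity (D1 * Dl * (D1 * det3 A B Z)); [ring| rewrite Id; ring]. }
    assert (0 <= D1 * D1) by nra. nra. }
  apply three_signs with (h1 := det3 B1 C1 Z * D1) (h2 := det3 C1 A1 Z * D1) (h3 := det3 A1 B1 Z * D1);
    try lra.
  - replace (x * Dl * (y * Dl)) with ((x*y) * (Dl*Dl)) by ring. apply Rmult_le_pos; nra.
  - replace (y * Dl * (z * Dl)) with ((y*z) * (Dl*Dl)) by ring. apply Rmult_le_pos; nra.
  - replace (z * Dl * (x * Dl)) with ((z*x) * (Dl*Dl)) by ring. apply Rmult_le_pos; nra.
Qed.

Lemma edge_contra a b c x y r : is_farey_triangle a b c -> x <> y -> ladder x y (HBd r) ->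
  let A := Vb (vtx a) in let B := Vb (vtx b) in let C := Vb (vtx c) in
  det3 A B (Vb x) * det3 A B C <= 0 -> det3 A B (Vb y) * det3 A B C <= 0 ->
  det3 A B (Vb r) * det3 A B C <= 0.
Proof.
  intros T Hxy [a1 [b1 [c1 [T1 [[u1 [v1 [Hg Hi]]] Hc]]]]] A B C HX HY.
  destruct (tri_distinct _ _ _ T1) as [d1 [d2 d3]].
  destruct (interior_det _ _ _ _ _ d1 d2 d3 Hi) as [Hv [h3 [h1 h2]]].
  apply (geo_det x y u1 v1 Hxy) in Hg. destruct Hg as [_ Hg].
  destruct (chord x y u1 v1 Hxy Hv Hg) as [l [m [Pl [Pm HZ]]]].
  assert (GZ : det3 A B (Zv u1 v1) * det3 A B C <= 0).
  { rewrite HZ.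
    replace ((l * det3 A B (Vb x) + m * det3 A B (Vb y)) * det3 A B C) with
      (l * (det3 A B (Vb x) * det3 A B C) + m * (det3 A B (Vb y) * det3 A B C)) by ring.
    assert (l * (det3 A B (Vb x) * det3 A B C) <= 0).
    { apply Rmult_le_reg_l with (/l); [apply Rinv_0_lt_compat; lra|].
      field_simplify; try lra. }
    assert (m * (det3 A B (Vb y) * det3 A B C) <= 0).
    { apply Rmult_le_reg_l with (/m); [apply Rinv_0_lt_compat; lra|].
      field_simplify; try lra. }
    lra. }
  destruct (lemN a b c a1 b1 c1 (Zv u1 v1) T T1 h3 h1 h2 GZ) as [R1 [R2 R3]].
  simpl in Hc. destruct Hc as [E|[E|E]]; subst r; assumption.
Qed.

Lemma mult_pos_le l g : 0 < l -> g <= 0 -> l * g <= 0.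
Proof. intros; nra. Qed.

Lemma pos_comb k l m p q d : 0 < k -> l*(p*d) + m*(q*d) > 0 -> k*(l*p+m*q)*d > 0.
Proof.
  intros. replace (k*(l*p+m*q)*d) with (k*(l*(p*d)+m*(q*d))) by ring.
  apply Rmult_lt_0_compat; lra.
Qed.

Theorem mainTheorem4 (x y r s : bpt) :
  x <> y ->
  is_farey_vertex r -> is_farey_vertex s -> r <> s ->
  ladder x y (HBd r) -> ladder x y (HBd s) ->
  forall P : hpt, ladder r s P -> ladder x y P.
Proof.
  intros Hxy _ _ Hrs Lr Ls P [a [b [c [T [[u0 [v0 [Hg0 Hi0]]] Hc]]]]].
  exists a, b, c. split; auto. split; auto.
  destruct (tri_distinct _ _ _ T) as [d1 [d2 d3]].
  destruct (interior_det _ _ _ _ _ d1 d2 d3 Hi0) as [Hv0 [k3 [k1 k2]]].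
  apply (geo_det r s u0 v0 Hrs) in Hg0. destruct Hg0 as [_ Hg0].
  destruct (chord r s u0 v0 Hrs Hv0 Hg0) as [l0 [m0 [Pl0 [Pm0 HZ0]]]].
  set (A := Vb (vtx a)) in *. set (B := Vb (vtx b)) in *. set (C := Vb (vtx c)) in *.
  set (X := Vb x). set (Y := Vb y).
  pose proof (tri_rot _ _ _ T) as T'. pose proof (tri_rot _ _ _ T') as T''.
  assert (N3 : det3 A B X * det3 A B C > 0 \/ det3 A B Y * det3 A B C > 0).
  { destruct (Rle_or_lt (det3 A B X * det3 A B C) 0) as [h1|]; auto.
    destruct (Rle_or_lt (det3 A B Y * det3 A B C) 0) as [h2|]; auto. exfalso.
    pose proof (edge_contra a b c x y r T Hxy Lr h1 h2).
    pose proof (edge_contra a b c x y s T Hxy Ls h1 h2).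
    rewrite HZ0 in k3.
    assert (((l0 * det3 A B (Vb r) + m0 * det3 A B (Vb s)) * det3 A B C) =
       l0 * (det3 A B (Vb r) * det3 A B C) + m0 * (det3 A B (Vb s) * det3 A B C)) by ring.
    pose proof (mult_pos_le l0 _ Pl0 H). pose proof (mult_pos_le m0 _ Pm0 H0). cbv zeta in *. unfold A, B, C in *. lra. }
  assert (N1 : det3 B C X * det3 B C A > 0 \/ det3 B C Y * det3 B C A > 0).
  { destruct (Rle_or_lt (det3 B C X * det3 B C A) 0) as [h1|]; auto.
    destruct (Rle_or_lt (det3 B C Y * det3 B C A) 0) as [h2|]; auto. exfalso.
    pose proof (edge_contra b c a x y r T' Hxy Lr h1 h2).
    pose proof (edge_contra b c a x y s T' Hxy Ls h1 h2).
    rewrite HZ0 in k1.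
    assert (((l0 * det3 B C (Vb r) + m0 * det3 B C (Vb s)) * det3 B C A) =
       l0 * (det3 B C (Vb r) * det3 B C A) + m0 * (det3 B C (Vb s) * det3 B C A)) by ring.
    pose proof (mult_pos_le l0 _ Pl0 H). pose proof (mult_pos_le m0 _ Pm0 H0). cbv zeta in *. unfold A, B, C in *. lra. }
  assert (N2 : det3 C A X * det3 C A B > 0 \/ det3 C A Y * det3 C A B > 0).
  { destruct (Rle_or_lt (det3 C A X * det3 C A B) 0) as [h1|]; auto.
    destruct (Rle_or_lt (det3 C A Y * det3 C A B) 0) as [h2|]; auto. exfalso.
    pose proof (edge_contra c a b x y r T'' Hxy Lr h1 h2).
    pose proof (edge_contra c a b x y s T'' Hxy Ls h1 h2).
    rewrite HZ0 in k2.
    assert (((l0 * det3 C A (Vb r) + m0 * det3 C A (Vb s)) * det3 C A B) =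
       l0 * (det3 C A (Vb r) * det3 C A B) + m0 * (det3 C A (Vb s) * det3 C A B)) by ring.
    pose proof (mult_pos_le l0 _ Pl0 H). pose proof (mult_pos_le m0 _ Pm0 H0). cbv zeta in *. unfold A, B, C in *. lra. }
  pose proof (Q_self (vtx a)) as QA. pose proof (Q_self (vtx b)) as QB. pose proof (Q_self (vtx c)) as QC.
  pose proof (Q_neg _ _ d1) as QAB. pose proof (Q_neg _ _ d2) as QBC. pose proof (Q_neg _ _ d3) as QCA.
  fold A B C in QA, QB, QC, QAB, QBC, QCA.
  destruct (bary_facts A B C X QA QB QC (Q_self x) (Q_le _ _) (Q_le _ _) (Q_le _ _))
    as [bx [ix1 [ix2 ix3]]].
  destruct (bary_facts A B C Y QA QB QC (Q_self y) (Q_le _ _) (Q_le _ _) (Q_le _ _))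
    as [by' [iy1 [iy2 iy3]]].
  unfold g1, g2, g3 in *.
  destruct (lemA _ _ _ _ _ _ (- Qf A B) (- Qf B C) (- Qf C A) ltac:(lra) ltac:(lra) ltac:(lra)
     bx by' ix1 ix2 ix3 iy1 iy2 iy3 N1 N2 N3) as [l [m [Pl [Pm [G1 [G2 G3]]]]]].
  destruct (chord_conv x y l m Hxy Pl Pm) as [u [v [k [Pv [Pk HZ]]]]].
  exists u, v. split.
  - apply geo_det; auto. split; auto. rewrite HZ. fold X Y. rewrite det_rep, det_rep2. ring.
  - apply det_interior; auto; rewrite HZ; apply pos_comb; auto.
Qed.
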